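(* Let $F:(0,\infty)\to(0,\infty)$ be strictly decreasing and let $(x_n)_{n\in\mathbb Z}$ be an equilibrium configuration for $F$ that is periodic, i.e. there are an integer $k\ge1$ and a real $t>0$ with $x_{n+k}=x_n+t$ for all $n\in\mathbb Z$. Then the configuration is trivial.
   Context: A force law is a strictly decreasing function $F:(0,\infty)\to(0,\infty)$; two particles at distance $d$ repel each other with force of magnitude $F(d)$. A configuration is a strictly increasing bi-infinite sequence $(x_n)_{n\in\mathbb Z}$ of reals. The particle at $x_n$ is in equilibrium if $\sum_{m<n}F(x_n-x_m)$ and $\sum_{m>n}F(x_m-x_n)$ are both finite and equal. An equilibrium configuration is a configuration in which every particle is in equilibrium. It is trivial if $x_{n+1}-x_n$ is constant. *)

(* Defs.v *)
From Stdlib Require Import Reals ZArith.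
Open Scope R_scope.

(* A force law: F : (0,oo) -> (0,oo) strictly decreasing.  F is a total
   function R -> R; only its values on (0,oo) matter. *)
Definition force_law (F : R -> R) : Prop :=
  (forall d, 0 < d -> 0 < F d) /\
  (forall d e, 0 < d -> d < e -> F e < F d).

Definition configuration (x : Z -> R) : Prop :=
  forall n : Z, x n < x (n + 1)%Z.

(* Particle n is in equilibrium: the left sum  sum_{m<n} F(x_n - x_m)
   = sum_{j>=0} F(x_n - x_{n-j-1}) and the right sum
   sum_{m>n} F(x_m - x_n) = sum_{j>=0} F(x_{n+j+1} - x_n) both converge
   (to finite limits) and are equal.  Terms are positive, so the
   enumeration order of the index sets is irrelevant. *)
Definition in_equilibrium (F : R -> R) (x : Z -> R) (n : Z) : Prop :=
  exists L : R,
    infinite_sum (fun j : nat => F (x n - x (n - Z.of_nat j - 1)%Z)) L /\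
    infinite_sum (fun j : nat => F (x (n + Z.of_nat j + 1)%Z - x n)) L.

Definition equilibrium_configuration (F : R -> R) (x : Z -> R) : Prop :=
  configuration x /\ forall n : Z, in_equilibrium F x n.

Definition trivial_configuration (x : Z -> R) : Prop :=
  exists c : R, forall n : Z, x (n + 1)%Z - x n = c.

(* Main.v *)
Require Import Defs.
From Stdlib Require Import Reals ZArith Lra Lia Classical.
Open Scope R_scope.

Lemma sum_ge_term (d : nat -> R) (j0 : nat) :
  (forall j, 0 <= d j) -> forall n, (j0 <= n)%nat -> d j0 <= sum_f_R0 d n.
Proof.
  intros Hd n. induction n as [|m IH]; intros Hn.
  - assert (j0 = 0%nat) by lia. subst. simpl. lra.
  - destruct (Nat.eq_dec j0 (S m)) as [->|Hne].
    + simpl. assert (0 <= sum_f_R0 d m) by (apply cond_pos_sum; auto). lra.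
    + simpl. assert (d j0 <= sum_f_R0 d m) by (apply IH; lia).
      specialize (Hd (S m)). lra.
Qed.

Lemma sum_minus (a b : nat -> R) n :
  sum_f_R0 (fun j => b j - a j) n = sum_f_R0 b n - sum_f_R0 a n.
Proof. induction n; simpl; [lra|rewrite IHn; lra]. Qed.

Lemma series_contra (a b : nat -> R) (L : R) (j0 : nat) :
  (forall j, a j <= b j) -> a j0 < b j0 ->
  infinite_sum a L -> infinite_sum b L -> False.
Proof.
  intros Hle Hlt Ha Hb.
  set (del := b j0 - a j0).
  assert (Hdel : 0 < del) by (unfold del; lra).
  destruct (Ha (del/2)) as [N1 HN1]; [lra|].
  destruct (Hb (del/2)) as [N2 HN2]; [lra|].
  set (n := Nat.max j0 (Nat.max N1 N2)).
  specialize (HN1 n ltac:(unfold n; lia)).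
  specialize (HN2 n ltac:(unfold n; lia)).
  unfold R_dist in *.
  assert (H := sum_ge_term (fun j => b j - a j) j0
     ltac:(intro j; specialize (Hle j); lra) n ltac:(unfold n; lia)).
  rewrite sum_minus in H. simpl in H.
  apply Rabs_def2 in HN1. apply Rabs_def2 in HN2. unfold del in *. lra.
Qed.

Theorem mainTheorem2 (F : R -> R) (x : Z -> R) (k : Z) (t : R) :
  force_law F ->
  equilibrium_configuration F x ->
  (1 <= k)%Z -> 0 < t ->
  (forall n : Z, x (n + k)%Z = x n + t) ->
  trivial_configuration x.
Proof.
  intros [Fpos Fdec] [Hconf Heq] Hk Ht Hper.
  assert (Hk0 : IZR k <> 0) by (apply not_0_IZR; lia).
  set (c := t / IZR k).
  set (f := fun n => x n - IZR n * c).
  assert (fper : forall n, f (n + k)%Z = f n).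
  { intro n. unfold f, c. rewrite Hper, plus_IZR. field. auto. }
  assert (fperq : forall (q : nat) n, f (n + Z.of_nat q * k)%Z = f n).
  { induction q; intro n.
    - f_equal. lia.
    - replace (n + Z.of_nat (S q) * k)%Z with ((n + Z.of_nat q * k) + k)%Z by lia.
      rewrite fper. apply IHq. }
  assert (fperz : forall (q : Z) n, f (n + q * k)%Z = f n).
  { intros q n. destruct (Z_le_gt_dec 0 q).
    - replace q with (Z.of_nat (Z.to_nat q)) by lia. apply fperq.
    - rewrite <- (fperq (Z.to_nat (- q)) (n + q * k)%Z). f_equal. lia. }
  assert (fmod : forall n, f n = f (n mod k)%Z).
  { intro n. rewrite (Z.div_mod n k) at 1 by lia.
    rewrite <- (fperz (n / k)%Z (n mod k)%Z). f_equal. lia. }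
  assert (Hmin : forall m : nat, exists i : Z, (0 <= i <= Z.of_nat m)%Z /\
            forall j : Z, (0 <= j <= Z.of_nat m)%Z -> f i <= f j).
  { induction m as [|m [i [Hi Hij]]].
    - exists 0%Z. split; [lia|]. intros j Hj. replace j with 0%Z by lia. lra.
    - destruct (Rle_dec (f i) (f (Z.of_nat (S m)))).
      + exists i. split; [lia|]. intros j Hj.
        destruct (Z.eq_dec j (Z.of_nat (S m))) as [->|]; auto. apply Hij; lia.
      + exists (Z.of_nat (S m)). split; [lia|]. intros j Hj.
        destruct (Z.eq_dec j (Z.of_nat (S m))) as [->|]; [lra|].
        specialize (Hij j ltac:(lia)). lra. }
  destruct (Hmin (Z.to_nat (k - 1))) as [n0 [Hn0 Hn0m]].
  assert (Hglob : forall n, f n0 <= f n).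
  { intro n. rewrite (fmod n). apply Hn0m.
    pose proof (Z.mod_pos_bound n k ltac:(lia)). lia. }
  assert (Hinc : forall n (m : nat), x n < x (n + Z.of_nat m + 1)%Z).
  { intros n m. induction m.
    - replace (n + Z.of_nat 0 + 1)%Z with (n + 1)%Z by lia. apply Hconf.
    - replace (n + Z.of_nat (S m) + 1)%Z with ((n + Z.of_nat m + 1) + 1)%Z by lia.
      specialize (Hconf (n + Z.of_nat m + 1)%Z). lra. }
  assert (Fle : forall d e, 0 < d -> d <= e -> F e <= F d).
  { intros d e Hd Hde. destruct (Req_dec d e) as [->|]; [lra|].
    apply Rlt_le, Fdec; lra. }
  destruct (classic (exists j : nat, f n0 < f (n0 + Z.of_nat j + 1)%Z)) as
    [[j0 Hj0] | Hall].
  - exfalso.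
    destruct (Heq n0) as [L [HL HR]].
    eapply (series_contra _ _ L j0); [ | | exact HR | exact HL].
    + intro j.
      pose proof (Hinc n0 j). pose proof (Hinc (n0 - Z.of_nat j - 1)%Z j).
      replace (n0 - Z.of_nat j - 1 + Z.of_nat j + 1)%Z with n0 in * by lia.
      apply Fle; [lra|].
      pose proof (Hglob (n0 - Z.of_nat j - 1)%Z).
      pose proof (Hglob (n0 + Z.of_nat j + 1)%Z).
      unfold f in *.
      replace (IZR (n0 + Z.of_nat j + 1)) with (IZR n0 + IZR (Z.of_nat j + 1)) in *
        by (rewrite <- plus_IZR; f_equal; lia).
      replace (IZR (n0 - Z.of_nat j - 1)) with (IZR n0 - IZR (Z.of_nat j + 1)) in *
        by (rewrite <- minus_IZR; f_equal; lia).
      nra.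
    + pose proof (Hinc n0 j0). pose proof (Hinc (n0 - Z.of_nat j0 - 1)%Z j0).
      replace (n0 - Z.of_nat j0 - 1 + Z.of_nat j0 + 1)%Z with n0 in * by lia.
      apply Fdec; [lra|].
      pose proof (Hglob (n0 - Z.of_nat j0 - 1)%Z).
      unfold f in *.
      replace (IZR (n0 + Z.of_nat j0 + 1)) with (IZR n0 + IZR (Z.of_nat j0 + 1)) in *
        by (rewrite <- plus_IZR; f_equal; lia).
      replace (IZR (n0 - Z.of_nat j0 - 1)) with (IZR n0 - IZR (Z.of_nat j0 + 1)) in *
        by (rewrite <- minus_IZR; f_equal; lia).
      nra.
  - assert (Hconst : forall n, f n = f n0).
    { intro n.
      set (r := ((n - n0) mod k)%Z).
      assert (Hr : (0 <= r < k)%Z) by (apply Z.mod_pos_bound; lia).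
      assert (Hfr : f (n0 + r)%Z = f n0).
      { destruct (Z.eq_dec r 0) as [->|Hr0]. { f_equal. lia. }
        pose proof (Hglob (n0 + r)%Z).
        destruct (Rle_lt_or_eq_dec _ _ H) as [Hl|Hl]; [|auto].
        exfalso. apply Hall. exists (Z.to_nat (r - 1)).
        replace (n0 + Z.of_nat (Z.to_nat (r - 1)) + 1)%Z with (n0 + r)%Z by lia.
        auto. }
      rewrite <- Hfr.
      pose proof (Z.div_mod (n - n0) k ltac:(lia)) as Hd. fold r in Hd.
      replace n with (n0 + r + ((n - n0) / k) * k)%Z at 1 by lia.
      apply fperz. }
    exists c. intro n. pose proof (Hconst n). pose proof (Hconst (n + 1)%Z).
    unfold f in *. rewrite plus_IZR in *. lra.
Qed.
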